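(* Let $K$ be a finite simplicial complex equipped with two assignments of edge lengths, giving discrete geodesic distance functions $f^1_p$ and $f^2_p$ for each vertex $p$ of $K$, and let $\epsilon=\max_{p\in\mathrm{Vert}(K)}\max_{q\in\mathrm{Vert}(K)}|f^1_p(q)-f^2_p(q)|$. Then for every homology class $h\in H_d(K;\mathbb{Z}_2)$, $|S^1(h)-S^2(h)|\le\epsilon$, where $S^1,S^2$ denote the size of $h$ computed with respect to $f^1$ and $f^2$ respectively.
   Context: For a given edge-length assignment, $f_p(q)$ is the length of a shortest path from vertex $p$ to vertex $q$ in the 1-skeleton of $K$, extended to simplices by $f_p(\sigma)=\max_{q\in\mathrm{Vert}(\sigma)}f_p(q)$. The geodesic ball $B_p^t=\{\sigma\in K: f_p(\sigma)\le t\}$ is a subcomplex; it carries a class $h$ if it contains some cycle representing $h$ (over $\mathbb{Z}_2$). $r_{f_p}(h)$ is the smallest $t$ such that $B_p^t$ carries $h$, and the size of $h$ is $S(h)=\min_{p\in\mathrm{Vert}(K)}r_{f_p}(h)$. *)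

(* Defs.v *)
From HB Require Import structures.
From mathcomp Require Import all_boot all_order all_algebra.
Set Implicit Arguments. Unset Strict Implicit. Unset Printing Implicit Defensive.
Import Order.TTheory GRing.Theory Num.Theory.
Local Open Scope ring_scope.

Section Complexes.
Variables (R : realFieldType) (V : finType).
Implicit Types (K L c z b : {set {set V}}).

Definition is_complex K : Prop :=
  (forall s : {set V}, s \in K -> s != set0) /\
  (forall s t : {set V}, s \in K -> t \subset s -> t != set0 -> t \in K).

Definition vert K (v : V) : bool := [set v] \in K.

Definition adj K (u v : V) : bool := (u != v) && ([set u; v] \in K).

(* length of a walk p = v0, v1, ..., vk (s = [:: v1; ...; vk]) *)
Definition walk_len (l : {set V} -> R) (p : V) (s : seq V) : R :=
  \sum_(e <- zip (p :: s) s) l [set e.1; e.2].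

Definition is_walk K (p q : V) (s : seq V) : bool :=
  path (adj K) p s && (last p s == q).

Definition edge_lengths K (l : {set V} -> R) : Prop :=
  forall u v, adj K u v -> 0 < l [set u; v].

Definition is_geodesic K (l : {set V} -> R) (f : V -> V -> R) : Prop :=
  forall p q, vert K p -> vert K q ->
    (exists2 s, is_walk K p q s & walk_len l p s = f p q) /\
    (forall s, is_walk K p q s -> f p q <= walk_len l p s).

Definition fsimp (f : V -> V -> R) (p : V) (s : {set V}) : R :=
  \big[Num.max/0]_(q in s) f p q.

Definition ball K (f : V -> V -> R) (p : V) (t : R) : {set {set V}} :=
  [set s in K | fsimp f p s <= t].

(* Z_2-chains are sets of simplices; sum is symmetric difference. *)
Definition chain_add c c' : {set {set V}} := (c :\: c') :|: (c' :\: c).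

(* boundary over Z_2 (non-augmented) *)
Definition bd c : {set {set V}} :=
  [set t : {set V} | (0 < #|t|)%N &&
     odd #|[set s in c | (t \subset s) && (#|s| == #|t|.+1)]| ].

(* c is a d-chain of L (all simplices of dimension d, i.e. d+1 vertices) *)
Definition is_chain L (d : nat) c : Prop :=
  c \subset L /\ (forall s : {set V}, s \in c -> #|s| = d.+1).

Definition is_cycle L (d : nat) c : Prop := is_chain L d c /\ bd c = set0.

Definition homologous K (d : nat) c c' : Prop :=
  exists2 b, is_chain K d.+1 b & bd b = chain_add c c'.

Definition carries K L (d : nat) z : Prop :=
  exists2 c, is_cycle L d c & homologous K d c z.

(* r_{f_p}(h) = t : the smallest t such that B_p^t carries h = [z] *)
Definition is_radius K (f : V -> V -> R) (d : nat) z (p : V) (t : R) : Prop :=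
  carries K (ball K f p t) d z /\
  (forall t', carries K (ball K f p t') d z -> t <= t').

Definition is_size K (f : V -> V -> R) (d : nat) z (S : R) : Prop :=
  (exists2 p, vert K p & is_radius K f d z p S) /\
  (forall p r, vert K p -> is_radius K f d z p r -> S <= r).

Definition dist_eps K (f1 f2 : V -> V -> R) : R :=
  \big[Num.max/0]_(p | vert K p) \big[Num.max/0]_(q | vert K q) `|f1 p q - f2 p q|.

End Complexes.

(* Main.v *)
Require Import Defs.
From HB Require Import structures.
From mathcomp Require Import all_boot all_order all_algebra.
From mathcomp Require Import lra.
From Stdlib Require Import Classical.
Import Order.TTheory GRing.Theory Num.Theory.
Local Open Scope ring_scope.

Section Aux.
Variables (R : realFieldType) (V : finType).


Lemma bigmax_ub (I : Type) (r : seq I) (P : pred I) (F : I -> R) (x : R) :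
  0 <= x -> (forall i, P i -> F i <= x) ->
  \big[Num.max/0]_(i <- r | P i) F i <= x.
Proof.
move=> x0 H; apply: (big_ind (fun y => y <= x)) => //.
by move=> a b Ha Hb; rewrite ge_max Ha Hb.
Qed.

Lemma bigmax_lb0 (I : Type) (r : seq I) (P : pred I) (F : I -> R) :
  0 <= \big[Num.max/0]_(i <- r | P i) F i.
Proof.
elim: r => [|a r IH]; first by rewrite big_nil.
rewrite big_cons; case: (P a) => //.
by rewrite le_max IH orbT.
Qed.

Lemma bigmax_lb (I : eqType) (r : seq I) (P : pred I) (F : I -> R) (i : I) :
  i \in r -> P i -> F i <= \big[Num.max/0]_(j <- r | P j) F j.
Proof.
elim: r => [|a r IH] //; rewrite in_cons big_cons => /orP [/eqP ->|ir] Pi.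
  by rewrite Pi le_max lexx.
case: (P a); last exact: IH.
by rewrite le_max (IH ir Pi) orbT.
Qed.

Lemma bigmax_lb_fin (T : finType) (A : {pred T}) (F : T -> R) (i : T) :
  i \in A -> F i <= \big[Num.max/0]_(j in A) F j.
Proof. by move=> iA; apply: bigmax_lb => //; exact: mem_index_enum. Qed.

Lemma bigmax_lb_finP (T : finType) (A : pred T) (F : T -> R) (i : T) :
  A i -> F i <= \big[Num.max/0]_(j | A j) F j.
Proof. by move=> iA; apply: bigmax_lb => //; exact: mem_index_enum. Qed.

Lemma fsimp_ge0 (f : V -> V -> R) p s : 0 <= fsimp f p s.
Proof. exact: bigmax_lb0. Qed.

Lemma ball_mono (K : {set {set V}}) (f : V -> V -> R) p t t' : t <= t' -> ball K f p t \subset ball K f p t'.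
Proof.
move=> tt'; apply/subsetP => s; rewrite !inE => /andP [-> h] /=.
exact: le_trans h tt'.
Qed.

Lemma carries_mono (K L L' : {set {set V}}) d z : L \subset L' -> carries K L d z -> carries K L' d z.
Proof.
move=> sLL' [c [[cL Hc] bc] hc]; exists c => //; split => //; split => //.
exact: subset_trans cL sLL'.
Qed.

Definition cmax (K : {set {set V}}) (f : V -> V -> R) p t := \big[Num.max/0]_(s in ball K f p t) fsimp f p s.

Lemma ball_cmax (K : {set {set V}}) (f : V -> V -> R) p t : 0 <= t -> ball K f p (cmax K f p t) = ball K f p t.
Proof.
move=> t0; apply/eqP; rewrite eqEsubset; apply/andP; split.
  apply: ball_mono; apply: bigmax_ub => // s; rewrite inE => /andP [].
  by [].
apply/subsetP => s sb; have := sb; rewrite !inE => /andP [-> _] /=.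
rewrite /cmax; exact: (bigmax_lb_fin _ _ (fun s => fsimp f p s) _ sb).
Qed.

Lemma cmax_le (K : {set {set V}}) (f : V -> V -> R) p t : 0 <= t -> cmax K f p t <= t.
Proof. by move=> t0; apply: bigmax_ub => // s; rewrite inE => /andP []. Qed.

Lemma radius_exists (K : {set {set V}}) (f : V -> V -> R) d (z : {set {set V}}) p t0 :
  (forall t, carries K (ball K f p t) d z -> 0 <= t) ->
  carries K (ball K f p t0) d z -> exists r, is_radius K f d z p r.
Proof.
move=> H0 Ct0.
have [n Hn] : exists n, (#|ball K f p t0| < n)%N by exists #|ball K f p t0|.+1.
elim: n t0 Hn Ct0 => [//|n IH] t0 Hn Ct0.
set c := cmax K f p t0.
have t00 := H0 _ Ct0.
have bc : ball K f p c = ball K f p t0 by exact: ball_cmax.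
have Cc : carries K (ball K f p c) d z by rewrite bc.
case: (classic (forall t', carries K (ball K f p t') d z -> c <= t')) =>
     [Hmin|]; first by exists c.
move=> /not_all_ex_not [t' Ht']; have [Ct' /negP] := imply_to_and _ _ Ht'.
rewrite -ltNge => t'c.
have t'0 := H0 _ Ct'.
have sub : ball K f p t' \subset ball K f p t0.
  by rewrite -bc; apply: ball_mono; exact: ltW.
have neq : ball K f p t' != ball K f p t0.
  apply/eqP => E; have := cmax_le K f p t' t'0.
  rewrite /cmax E -/(cmax K f p t0) -/c => h.
  by have := lt_le_trans t'c h; rewrite ltxx.
have lt : (#|ball K f p t'| < #|ball K f p t0|)%N
  by apply: proper_card; rewrite properEneq neq sub.
by apply: (IH t') => //; exact: leq_trans lt Hn.
Qed.



Lemma ball_empty (K : {set {set V}}) (f : V -> V -> R) p t : t < 0 -> ball K f p t = set0.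
Proof.
move=> t0; apply/setP => s; rewrite !inE.
case E: (fsimp f p s <= t); last by rewrite andbF.
have := le_lt_trans (fsimp_ge0 f p s) (le_lt_trans E t0); by rewrite ltxx.
Qed.

Lemma half (K : {set {set V}}) (f1 f2 : V -> V -> R) d (z : {set {set V}}) S1 S2 :
  is_complex K -> is_size K f1 d z S1 -> is_size K f2 d z S2 ->
  S2 <= S1 + dist_eps K f1 f2.
Proof.
move=> [_ HK] [[p1 vp1 [C1 M1]] _] [_ M2].
set e := dist_eps K f1 f2.
have e0 : 0 <= e by apply: bigmax_lb0.
have sub : ball K f1 p1 S1 \subset ball K f2 p1 (S1 + e).
  apply/subsetP => s; rewrite !inE => /andP [sK h]; rewrite sK /=.
  apply: le_trans (lerD h (lexx e)).
  apply: bigmax_ub; first by apply: addr_ge0 => //; apply: fsimp_ge0.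
  move=> q qs.
  have vq : vert K q.
    rewrite /vert; apply: (HK s) => //; first by rewrite sub1set.
    by apply/set0Pn; exists q; rewrite inE.
  have h1 : f1 p1 q <= fsimp f1 p1 s.
    exact: (bigmax_lb_fin _ _ (fun q => f1 p1 q) _ qs).
  have h2 : `|f1 p1 q - f2 p1 q| <= e.
    apply: le_trans (bigmax_lb_finP _ (vert K) (fun p => \big[Num.max/0]_(q | vert K q) `|f1 p q - f2 p q|) _ vp1).
    exact: (bigmax_lb_finP _ (vert K) (fun q => `|f1 p1 q - f2 p1 q|) _ vq).
  have := ler_norml (f1 p1 q - f2 p1 q) e; rewrite h2 => /esym /andP [h3 _].
  lra.
have C2 := carries_mono _ _ _ _ _ sub C1.
have H0 : forall t, carries K (ball K f2 p1 t) d z -> 0 <= t.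
  move=> t Ct; rewrite leNgt; apply/negP => t0.
  rewrite ball_empty // in Ct.
  have Cu : forall u, u < 0 -> carries K (ball K f1 p1 u) d z
    by move=> u u0; rewrite ball_empty.
  have h1 : S1 <= -1 by apply: M1; apply: Cu; lra.
  have h2 : S1 <= S1 - 1 by apply: M1; apply: Cu; lra.
  lra.
have [r [Cr Mr]] := radius_exists _ _ _ _ _ _ H0 C2.
have := M2 _ _ vp1 (conj Cr Mr); have := Mr _ C2; lra.
Qed.

Lemma dist_eps_sym (K : {set {set V}}) (f1 f2 : V -> V -> R) : dist_eps K f1 f2 = dist_eps K f2 f1.
Proof.
by apply: eq_bigr => p _; apply: eq_bigr => q _; rewrite distrC.
Qed.

End Aux.

Theorem theorem3p1 (R : realFieldType) (V : finType) (K : {set {set V}})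
  (HK : is_complex K)
  (l1 l2 : {set V} -> R) (Hl1 : edge_lengths K l1) (Hl2 : edge_lengths K l2)
  (f1 f2 : V -> V -> R) (Hf1 : is_geodesic K l1 f1) (Hf2 : is_geodesic K l2 f2)
  (d : nat) (z : {set {set V}}) (Hz : is_cycle K d z)
  (S1 S2 : R) (HS1 : is_size K f1 d z S1) (HS2 : is_size K f2 d z S2) :
  `|S1 - S2| <= dist_eps K f1 f2.
Proof.
have h1 := half _ _ _ _ _ _ _ _ _ HK HS1 HS2.
have h2 := half _ _ _ _ _ _ _ _ _ HK HS2 HS1.
rewrite dist_eps_sym in h2.
rewrite ler_norml; apply/andP; split; lra.
Qed.
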